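(* Let $\Omega\subset\mathbb{R}^n$ be a bounded open set and let $u$ be a viscosity subsolution of $\frac{\Delta_\infty u}{|Du|^2}=1$ in $\Omega$. Then there does not exist a nonempty open set $V\subset\Omega$ such that $u$ is constant on $V$.
   Context: $\Delta_\infty u=\sum_{i,j=1}^n u_{x_i}u_{x_j}u_{x_ix_j}$. $u$ is a viscosity subsolution of $\frac{\Delta_\infty u}{|Du|^2}=1$ in $\Omega$ if $u$ is upper semicontinuous and whenever $\phi\in C^2(\Omega)$ and $u-\phi$ has a local maximum at $x\in\Omega$, then $\frac{\Delta_\infty\phi(x)}{|D\phi(x)|^2}\ge 1$ if $D\phi(x)\neq0$, and $\max_{|p|=1}p\cdot D^2\phi(x)\,p\ge1$ if $D\phi(x)=0$. *)

(* Defs.v *)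
From HB Require Import structures.
From mathcomp Require Import all_boot all_order all_algebra.
From mathcomp Require Import all_classical all_reals all_analysis.
Set Implicit Arguments. Unset Strict Implicit. Unset Printing Implicit Defensive.
Import Order.TTheory GRing.Theory Num.Theory.
Import numFieldNormedType.Exports.
Local Open Scope classical_set_scope.
Local Open Scope ring_scope.

Section Defs.
Variables (R : realType) (n : nat).
Notation V := 'rV[R]_n.

Definition evec (i : 'I_n) : V := delta_mx 0 i.

Definition pd (i : 'I_n) (f : V -> R) : V -> R := fun x => derive f x (evec i).

Definition C2_on (O : set V) (f : V -> R) : Prop :=
  forall x, O x ->
    {for x, continuous f} /\
    (forall i, derivable f x (evec i) /\ {for x, continuous (pd i f)}) /\
    (forall i j, derivable (pd i f) x (evec j) /\
                 {for x, continuous (pd j (pd i f))}).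

Definition sqnorm (p : V) : R := \sum_(i < n) p 0 i ^+ 2.

Definition grad (f : V -> R) (x : V) : V := \row_i pd i f x.
Definition hess (f : V -> R) (x : V) (i j : 'I_n) : R := pd j (pd i f) x.

Definition inf_lap (f : V -> R) (x : V) : R :=
  \sum_(i < n) \sum_(j < n) pd i f x * pd j f x * hess f x i j.

Definition hess_form (f : V -> R) (x p : V) : R :=
  \sum_(i < n) \sum_(j < n) p 0 i * hess f x i j * p 0 j.

Definition usc_on (O : set V) (u : V -> R) : Prop :=
  forall x, O x -> forall e : R, 0 < e -> \forall y \near x, u y < u x + e.

Definition local_max_on (O : set V) (g : V -> R) (x : V) : Prop :=
  \forall y \near x, O y -> g y <= g x.

Definition visc_subsol (O : set V) (u : V -> R) : Prop :=
  usc_on O u /\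
  forall (phi : V -> R) (x : V), C2_on O phi -> O x ->
    local_max_on O (u \- phi) x ->
    (grad phi x != 0 -> inf_lap phi x / sqnorm (grad phi x) >= 1) /\
    (grad phi x = 0 ->
       exists2 p : V, sqnorm p = 1 & hess_form phi x p >= 1).
End Defs.

(* Main.v *)
Require Import Defs.
From HB Require Import structures.
From mathcomp Require Import all_boot all_order all_algebra.
From mathcomp Require Import all_classical all_reals all_analysis.
Import Order.TTheory GRing.Theory Num.Theory.
Import numFieldNormedType.Exports.
Local Open Scope classical_set_scope.
Local Open Scope ring_scope.

Lemma pd_cst (R : realType) (n : nat) (i : 'I_n) (c : R) :
  pd i (fun _ : 'rV[R]_n => c) = fun _ => 0.
Proof. by apply: funext => x; rewrite /pd derive_cst. Qed.

Theorem lemma2p3 (R : realType) (n : nat) (Omega : set 'rV[R]_n)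
    (u : 'rV[R]_n -> R) :
  open Omega -> bounded_set Omega -> visc_subsol Omega u ->
  ~ (exists V : set 'rV[R]_n,
       [/\ open V, V !=set0, V `<=` Omega & exists c : R, forall x, V x -> u x = c]).
Proof.
move=> _ _ [_ Hv] [V [oV [x0 Vx0] VO [c Hc]]].
have C2 : C2_on Omega (fun _ : 'rV[R]_n => c).
  move=> x _; split; first exact: cst_continuous.
  split=> [i|i j]; rewrite ?pd_cst; split.
  - exact: derivable_cst.
  - exact: cst_continuous.
  - exact: derivable_cst.
  - exact: cst_continuous.
have LM : local_max_on Omega (u \- (fun _ => c)) x0.
  rewrite /local_max_on.
  have nV : nbhs x0 V by apply: open_nbhs_nbhs; split.
  apply: filterS nV => y Vy _ /=.
  by rewrite Hc // Hc.
have [_ H2] := Hv _ x0 C2 (VO _ Vx0) LM.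
have G0 : grad (fun _ : 'rV[R]_n => c) x0 = 0.
  by apply/rowP => i; rewrite !mxE pd_cst.
have [p _] := H2 G0.
rewrite /hess_form /hess.
under eq_bigr => i _ do under eq_bigr => j _ do rewrite !pd_cst mulr0 mul0r.
rewrite big1 ?ler10 // => i _; exact: big1.
Qed.
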